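(* Let $\mathcal{B}=(T,\bowtie)$ be a block and $(B_1,\dots,B_k)$ a legal partition of $T$ with $k$ sets. Then the schedule $\mathcal S=\mathrm{LevelSchedule}(B_1,\dots,B_k)$ satisfies $\mathrm{Depth}((T,\mathcal S))\le k$, where $\mathrm{Depth}$ is the maximum number of vertices on a directed path.
   Context: A block consists of a finite set $T$ of transactions with a symmetric irreflexive conflict relation $\bowtie$. A set is conflict-free if no two elements conflict; a legal partition of $T$ is an ordered sequence of pairwise disjoint conflict-free sets with union $T$. $\mathrm{LevelSchedule}(B_1,\dots,B_k)$: set $B_0=\emptyset$, $\mathcal S=\emptyset$; for $i=1,\dots,k$ and, for each $i$, for $j=i-1,\dots,0$ (decreasing): let $E=\{(u,v)\in B_j\times B_i: u\bowtie v\}$, let $P$ be the set of pairs $(x,y)$ with a directed path from $x$ to $y$ in the current directed graph $(T,\mathcal S)$, and set $\mathcal S\leftarrow\mathcal S\cup(E\setminus P)$; output $\mathcal S$. *)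

(* Defs.v *)
From mathcomp Require Import all_boot.
Set Implicit Arguments. Unset Strict Implicit. Unset Printing Implicit Defensive.

Section Block.
Variables (T : finType) (conf : rel T).

Definition conflict_free (A : {set T}) : Prop :=
  forall x y, x \in A -> y \in A -> ~~ conf x y.

Definition legal_partition (B : seq {set T}) : Prop :=
  [/\ forall i j, i < j < size B -> [disjoint nth set0 B i & nth set0 B j],
      forall i, i < size B -> conflict_free (nth set0 B i)
    & \bigcup_(A <- B) A = [set: T]].

Definition edge_rel (S : {set T * T}) : rel T := fun x y => (x, y) \in S.

(* B_j with the convention B_0 = emptyset, B_i = i-th set of the sequence. *)
Definition blk (B : seq {set T}) (j : nat) : {set T} := nth set0 (set0 :: B) j.

Definition level_step (B : seq {set T}) (S : {set T * T}) (i j : nat)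
  : {set T * T} :=
  S :|: [set p : T * T | [&& p.1 \in blk B j, p.2 \in blk B i, conf p.1 p.2
                          & ~~ connect (edge_rel S) p.1 p.2]].

(* LevelSchedule(B_1,...,B_k): for i = 1..k, for j = i-1 downto 0. *)
Definition LevelSchedule (B : seq {set T}) : {set T * T} :=
  foldl (fun S i => foldl (fun S' j => level_step B S' i j) S (rev (iota 0 i)))
        set0 (iota 1 (size B)).

Definition depth_le (S : {set T * T}) (d : nat) : Prop :=
  forall (x : T) (p : seq T), path (edge_rel S) x p -> size (x :: p) <= d.

End Block.

(* Main.v *)
Require Import Defs.
From mathcomp Require Import all_boot.

Section Aux.
Variables (T : finType) (conf : rel T).

Lemma cover_in (s : seq {set T}) x :
  x \in \bigcup_(A <- s) A -> exists2 A, A \in s & x \in A.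
Proof.
elim: s => [|A s IH]; first by rewrite big_nil inE.
rewrite big_cons inE => /orP [h|/IH [A' h1 h2]].
  by exists A; rewrite ?inE ?eqxx.
by exists A'; rewrite // inE h1 orbT.
Qed.

Definition good (B : seq {set T}) (S : {set T * T}) :=
  forall p, p \in S -> exists a b, [/\ 0 < a, a < b, b <= size B,
     p.1 \in blk B a & p.2 \in blk B b].

Lemma blk0 (B : seq {set T}) (x : T) : x \in blk B 0 = false.
Proof. by rewrite /blk /= inE. Qed.

Lemma blk_big (B : seq {set T}) n (x : T) : size B < n -> x \in blk B n = false.
Proof.
case: n => [|n] //= h; rewrite /blk /= nth_default ?inE //.
Qed.

Lemma step_good B S i j : good B S -> 0 < i <= size B -> j < i ->
  good B (level_step conf B S i j).
Proof.
move=> gS /andP[i0 iB] ji p; rewrite /level_step !inE => /orP [/gS //|].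
case/and4P=> h1 h2 _ _.
case: j ji h1 => [|j] ji h1; first by rewrite blk0 in h1.
by exists j.+1, i.
Qed.

Lemma inner_good B S i js : good B S -> 0 < i <= size B ->
  all (fun j => j < i) js ->
  good B (foldl (fun S' j => level_step conf B S' i j) S js).
Proof.
elim: js S => [|j js IH] S //= gS hi /andP[hj hjs].
by apply: IH => //; apply: step_good.
Qed.

Lemma outer_good B S iss : good B S -> all (fun i => 0 < i <= size B) iss ->
  good B (foldl (fun S i => foldl (fun S' j => level_step conf B S' i j) S
     (rev (iota 0 i))) S iss).
Proof.
elim: iss S => [|i iss IH] S //= gS /andP[hi hiss].
apply: IH => //; apply: inner_good => //.
apply/allP => j; rewrite mem_rev mem_iota add0n; by case/andP.
Qed.

Lemma blk_uniq (B : seq {set T}) (x : T) a b : legal_partition conf B ->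
  x \in blk B a -> x \in blk B b -> a = b.
Proof.
case=> hd _ _.
case: a => [|a]; first by rewrite blk0.
case: b => [|b]; first by rewrite blk0.
rewrite /blk /= => ha hb.
have aB : a < size B by case: (ltnP a (size B)) => // h; rewrite nth_default ?inE in ha.
have bB : b < size B by case: (ltnP b (size B)) => // h; rewrite nth_default ?inE in hb.
case: (ltngtP a b) => [h|h|-> //].
  by have := hd a b; rewrite h bB => /(_ isT) /disjointFr /(_ ha); rewrite hb.
by have := hd b a; rewrite h aB => /(_ isT) /disjointFr /(_ hb); rewrite ha.
Qed.

End Aux.

Theorem lemma8 (T : finType) (conf : rel T) (k : nat) (B : seq {set T}) :
  symmetric conf -> irreflexive conf ->
  legal_partition conf B -> size B = k ->
  depth_le (LevelSchedule conf B) k.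
Proof.
move=> _ _ hL hk x p.
have gS : @good T B (LevelSchedule conf B).
  apply: outer_good; first by move=> q; rewrite inE.
  by apply/allP => i; rewrite mem_iota add1n ltnS.
have [a [a0 aB xa]] : exists a, [/\ 0 < a, a <= size B & x \in blk B a].
  have := hL; case=> _ _ hc.
  have : x \in \bigcup_(A <- B) A by rewrite hc inE.
  case/cover_in => A AB xA.
  exists (index A B).+1; split => //; first by rewrite index_mem.
  by rewrite /blk /= nth_index.
rewrite -hk.
suff : path (edge_rel (LevelSchedule conf B)) x p -> size (x :: p) <= size B - a + 1.
  move=> h /h {}h; apply: leq_trans h _; by rewrite addn1 ltn_subrL a0 (leq_trans a0 aB).
elim: p x a a0 aB xa => [|y p IH] x a a0 aB xa /=.
  by rewrite addn1.
case/andP=> hxy hp.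
have [a' [b' [a'0 ab' b'B h1 h2]]] := gS _ hxy.
have ea := @blk_uniq T conf B x a a' hL xa h1; subst a'.
have := IH y b' (leq_trans a0 (ltnW ab')) b'B h2 hp.
move=> /= h.
rewrite !addn1 !ltnS in h *; apply: leq_ltn_trans h _; exact: ltn_sub2l (leq_trans ab' b'B) ab'.
Qed.
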